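(* Let $f\in\mathfrak{F}$. If $G_1,G_2\in\mathcal{B}_f$, then $G_1\times G_2\in\mathcal{B}_f$.
   Context: $\mathfrak{F}$ is the set of nondecreasing functions from some interval $[Q,\infty)\cap\mathbb{N}$ to the nonnegative reals; $g\preceq f$ means there exist $N\ge0$ and positive integers $K,M$ with $g(n)\le Kf(Mn)$ for all $n\ge N$. For a group $G$ with finite generating set $A$, $S=A\cup A^{-1}$, $\pi:S^*\to G$ the evaluation map and $d_A$ the word metric: a Cayley automatic representation is a bijection $\psi:L\to G$ from a regular $L\subseteq S^*$ such that for each $a\in A$ the relation $\{(\psi^{-1}(g),\psi^{-1}(ga)) : g\in G\}$ is FA-recognizable (i.e., the language of convolutions — parallel readings of the two strings with the shorter padded by a new symbol — is regular). Its function is $h(n)=\max\{d_A(\pi(w),\psi(w)): w\in L,|w|\le n\}$, and $G\in\mathcal{B}_f$ means some Cayley automatic representation (for some finite generating set; this is independent of the choice) has $h\preceq f$. *)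

(* Defs.v *)
From mathcomp Require Import all_boot.
From Stdlib Require Import Reals.

Set Implicit Arguments.
Unset Strict Implicit.
Unset Printing Implicit Defensive.

Record Grp := {
  gcar :> Type;
  gmul : gcar -> gcar -> gcar;
  gone : gcar;
  ginv : gcar -> gcar;
  gmulA : forall x y z, gmul x (gmul y z) = gmul (gmul x y) z;
  gmul1 : forall x, gmul gone x = x;
  gmulV : forall x, gmul (ginv x) x = gone
}.

Definition prodGrp (G1 G2 : Grp) : Grp.
Proof.
refine {| gcar := (gcar G1 * gcar G2)%type;
          gmul := fun x y => (gmul x.1 y.1, gmul x.2 y.2);
          gone := (gone G1, gone G2);
          ginv := fun x => (ginv x.1, ginv x.2) |}.
- by move=> [x1 x2] [y1 y2] [z1 z2] /=; rewrite !gmulA.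
- by move=> [x1 x2] /=; rewrite !gmul1.
- by move=> [x1 x2] /=; rewrite !gmulV.
Defined.

Definition evalw (G : Grp) (T : Type) (sg : T -> G) (w : seq T) : G :=
  foldr (fun s acc => gmul (sg s) acc) (gone G) w.

Definition inS (G : Grp) (A : seq G) (x : G) : Prop :=
  exists a, List.In a A /\ (x = a \/ x = ginv a).

Definition generates (G : Grp) (A : seq G) : Prop :=
  forall g : G, exists w : seq G, List.Forall (inS A) w /\ evalw (fun x : G => x) w = g.

(* d_A(g,h) <= x, where d_A(g,h) = least length of a word over S
   evaluating to g^{-1} h (the word metric) *)
Definition dA_le (G : Grp) (A : seq G) (g h : G) (x : R) : Prop :=
  exists w : seq G, List.Forall (inS A) w /\ evalw (fun x : G => x) w = gmul (ginv g) h
                    /\ (INR (size w) <= x)%R.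

Definition regular (T : Type) (Lang : seq T -> Prop) : Prop :=
  exists (Q : finType) (q0 : Q) (delta : Q -> T -> Q) (F : pred Q),
    forall w, Lang w <-> F (foldl delta q0 w).

(* convolution: parallel reading, shorter word padded by None *)
Definition conv (T1 T2 : Type) (u : seq T1) (v : seq T2)
  : seq (option T1 * option T2) :=
  [seq (onth u i, onth v i) | i <- iota 0 (maxn (size u) (size v))].

Definition fa_recognizable (T1 T2 : Type) (Rel : seq T1 -> seq T2 -> Prop) : Prop :=
  regular (fun x => exists u v, Rel u v /\ x = conv u v).

(* The alphabet S = A u A^{-1} is given as a type Sig together with a
   bijection sg : Sig -> S (injective, image exactly S). *)
Definition cayley_automatic (G : Grp) (A : seq G) (Sig : Type) (sg : Sig -> G)
  (L : seq Sig -> Prop) (psi : seq Sig -> G) : Prop :=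
  [/\ regular L,
      (forall g : G, exists w, L w /\ psi w = g),
      (forall u v, L u -> L v -> psi u = psi v -> u = v) &
      (forall a, List.In a A ->
         fa_recognizable (fun u v => L u /\ L v /\ psi v = gmul (psi u) a))].

(* h(n) <= r, where h(n) = max{ d_A(pi w, psi w) : w in L, |w| <= n } *)
Definition cafun_le (G : Grp) (A : seq G) (Sig : Type) (sg : Sig -> G)
  (L : seq Sig -> Prop) (psi : seq Sig -> G) (n : nat) (r : R) : Prop :=
  forall w, L w -> (size w <= n)%N -> dA_le A (evalw sg w) (psi w) r.

(* f in frak F: nondecreasing, nonnegative on [Q, oo) (values below Q are
   irrelevant and never used) *)
Definition frakF (Q : nat) (f : nat -> R) : Prop :=
  (forall n m, (Q <= n)%N -> (n <= m)%N -> (f n <= f m)%R) /\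
  (forall n, (Q <= n)%N -> (0 <= f n)%R).

(* G in B_f : some Cayley automatic representation (for some finite
   generating set A) has h <= f (h preceq f), i.e. there are N, K > 0, M > 0
   with h(n) <= K f(M n) for all n >= N (n >= Q ensures M n is in the domain
   of f). *)
Definition inB (Q : nat) (f : nat -> R) (G : Grp) : Prop :=
  exists (A : seq G), generates A /\
  exists (Sig : Type) (sg : Sig -> G),
    (forall s t, sg s = sg t -> s = t) /\
    (forall x, inS A x <-> exists s, sg s = x) /\
  exists (L : seq Sig -> Prop) (psi : seq Sig -> G),
    cayley_automatic A sg L psi /\
    exists (N K M : nat), (0 < K)%N /\ (0 < M)%N /\
      forall n, (N <= n)%N -> (Q <= n)%N ->
        cafun_le A sg L psi n (INR K * f (muln M n))%R.

(* Main.v *)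
Require Import Defs.
From mathcomp Require Import all_boot.
From Stdlib Require Import Reals.
From Stdlib Require Import ClassicalEpsilon ProofIrrelevance.

Set Implicit Arguments.
Unset Strict Implicit.
Unset Printing Implicit Defensive.

Definition EM (P : Prop) : {P} + {~ P} := excluded_middle_informative P.

Lemma regular_ext T (L L' : seq T -> Prop) :
  (forall w, L w <-> L' w) -> regular L -> regular L'.
Proof.
move=> H [Q [q0 [d [F HF]]]]; exists Q, q0, d, F => w.
split=> [/H/HF // | /HF/H //].
Qed.

Lemma regular_rec T (Q : finType) (d : Q -> T -> Q) (F : pred Q)
  (acc : Q -> seq T -> Prop) :
  (forall q, acc q [::] <-> F q) ->
  (forall q t w, acc q (t :: w) <-> acc (d q t) w) ->
  forall q0, regular (acc q0).
Proof.
move=> H0 HS q0; exists Q, q0, d, F => w.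
elim: w q0 => [|t w IH] q /=; first exact: H0.
split=> [/HS/IH // | /IH/HS //].
Qed.

Lemma regular_and T (L1 L2 : seq T -> Prop) :
  regular L1 -> regular L2 -> regular (fun w => L1 w /\ L2 w).
Proof.
move=> [Q1 [q1 [d1 [F1 H1]]]] [Q2 [q2 [d2 [F2 H2]]]].
exists (Q1 * Q2)%type, (q1, q2), (fun q t => (d1 q.1 t, d2 q.2 t)),
  (fun q => F1 q.1 && F2 q.2) => w.
have E : forall p1 p2, foldl (fun q t => (d1 q.1 t, d2 q.2 t)) (p1, p2) w
                      = (foldl d1 p1 w, foldl d2 p2 w).
  by elim: w {H1 H2} => [|t w IH] p1 p2 //=; rewrite IH.
rewrite E /=; split=> [[/H1 -> /H2 ->] // | /andP [/H1 ? /H2 ?] //].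
Qed.

Lemma regular_pmap P T (f : P -> option T) (L : seq T -> Prop) :
  regular L -> regular (fun x => L (pmap f x)).
Proof.
move=> [Q [q0 [d [F HF]]]].
exists Q, q0, (fun q p => if f p is Some t then d q t else q), F => x.
have E : forall q, foldl (fun q p => if f p is Some t then d q t else q) q x
                   = foldl d q (pmap f x).
  by elim: x {HF} => [|p x IH] q //=; case: (f p) => [t|] /=; rewrite IH.
by rewrite E; apply: HF.
Qed.

Lemma regular_map_inj T T' (g : T -> T') (L : seq T -> Prop) :
  injective g -> regular L -> regular (fun x => exists u, L u /\ x = map g u).
Proof.
move=> ginj [Q [q0 [d [F HF]]]].
pose pre (t' : T') : option T :=
  match EM (exists t, g t = t') with
  | left H => Some (proj1_sig (constructive_indefinite_description _ H))
  | right _ => None end.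
have preE : forall t, pre (g t) = Some t.
  move=> t; rewrite /pre; case: EM => [H|[]]; last by exists t.
  by case: constructive_indefinite_description => /= t0 /ginj ->.
have preN : forall t' t, pre t' = Some t -> t' = g t.
  move=> t' t; rewrite /pre; case: EM => // H.
  by case: constructive_indefinite_description => /= t0 <- [->].
pose acc (q : option Q) (x : seq T') :=
  if q is Some q then exists u, x = map g u /\ F (foldl d q u) else False.
apply: (regular_ext (L := acc (Some q0))).
  move=> x; split.
    by move=> [u [-> H]]; exists u; split=> //; apply/HF.
  by move=> [u [H ->]]; exists u; split=> //; apply/HF.
apply: (@regular_rec _ (option Q)
   (fun q t' => if q is Some q then omap (d q) (pre t') else None)
   (fun q => if q is Some q then F q else false)).
- case=> [q|] //=; split; first by case=> [[|? ?] [//= ->]].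
  by move=> Fq; exists [::].
- case=> [q|] t w //=; split.
    case=> [[|t0 u] [//= [Ht ->] Fq]]; rewrite Ht preE /=; by exists u.
  case E: (pre t) => [t0|] //= [u [-> Fq]].
  by exists (t0 :: u); rewrite (preN _ _ E).
Qed.

Section Seq4.
Variable T : Type.
Fixpoint seq_ind4 (Pr : seq T -> Prop) (H0 : Pr [::]) (H1 : forall a, Pr [:: a])
  (H2 : forall a b, Pr [:: a; b]) (H3 : forall a b c, Pr [:: a; b; c])
  (H4 : forall a b c e w, Pr w -> Pr [:: a, b, c, e & w]) (w : seq T) {struct w} : Pr w :=
  match w with
  | [::] => H0
  | [:: a] => H1 a
  | [:: a; b] => H2 a b
  | [:: a; b; c] => H3 a b c
  | [:: a, b, c, e & w'] => H4 a b c e w' (seq_ind4 H0 H1 H2 H3 H4 w')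
  end.
End Seq4.

Section Block4.
Variables (P T : Type) (W : finType) (idx : T -> W) (ofi : W -> T).
Hypothesis Hc : cancel idx ofi.
Variables (blk : P -> seq T).
Hypothesis binj : forall p q, size (blk p) = 4 -> blk p = blk q -> p = q.
Variables (Q : finType) (d : Q -> P -> Q) (F : pred Q).

Definition decB (ts : seq T) : option P :=
  match EM (exists p, blk p = ts /\ size ts = 4) with
  | left H => Some (proj1_sig (constructive_indefinite_description _ H))
  | right _ => None end.

Lemma decE p : size (blk p) = 4 -> decB (blk p) = Some p.
Proof.
move=> s; rewrite /decB; case: EM => [H|[]]; last by exists p.
case: constructive_indefinite_description => /= p0 [E _].
by congr Some; apply: (binj (p:=p0) (q:=p)); rewrite E.
Qed.

Lemma decN ts p : decB ts = Some p -> blk p = ts /\ size ts = 4.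
Proof.
rewrite /decB; case: EM => // H.
by case: constructive_indefinite_description => /= p0 H' [<-].
Qed.

Definition step (q : option Q) a b c e :=
  if q is Some q then omap (d q) (decB [:: a; b; c; e]) else None.

Fixpoint ba (q : option Q) (w : seq T) {struct w} : Prop :=
  match w with
  | [::] => if q is Some q then F q else False
  | [:: a, b, c, e & w'] => ba (step q a b c e) w'
  | _ => False end.

Lemma baN w : ~ ba None w.
Proof. by elim/seq_ind4: w => [|a|a b|a b c|a b c e w IH] //= []. Qed.

Lemma baE w q : ba (Some q) w <->
   exists x, (forall p, List.In p x -> size (blk p) = 4) /\ w = flatten (map blk x)
             /\ F (foldl d q x).
Proof.
elim/seq_ind4: w q => [q|a q|a b q|a b c q|a b c e w IH q] /=.
- split=> [Fq|]; first by exists [::].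
  case=> [[|p x] [Hs [E Fq]]] //; move: E (Hs p (or_introl erefl)) => /=.
  by case: (blk p).
- split=> //; case=> [[|p x] [Hs [E _]]] //; move: E (Hs p (or_introl erefl)) => /=.
  by case: (blk p) => [|? [|? [|? [|? [|]]]]].
- split=> //; case=> [[|p x] [Hs [E _]]] //; move: E (Hs p (or_introl erefl)) => /=.
  by case: (blk p) => [|? [|? [|? [|? [|]]]]].
- split=> //; case=> [[|p x] [Hs [E _]]] //; move: E (Hs p (or_introl erefl)) => /=.
  by case: (blk p) => [|? [|? [|? [|? [|]]]]].
- rewrite /step; case E: (decB _) => [p|] /=; last first.
    split=> [/baN //|[[|p x] [Hs [E2 _]]]] //.
    move: E2 (decE (Hs p (or_introl erefl))) (Hs p (or_introl erefl)) => /=.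
    case: (blk p) => [|a' [|b' [|c' [|e' [|]]]]] //= [<- <- <- <- _].
    by rewrite E.
  have [Eb _] := decN E.
  split.
    move/IH=> [x [Hs [-> Fq]]]; exists (p :: x); split; last by rewrite /= Eb.
    by move=> p' /= [<-|/Hs //]; rewrite Eb.
  case=> [[|p' x] [Hs [E2 Fq]]] //.
  have Hs' := Hs p' (or_introl erefl).
  move: E2 (decE Hs') => /=.
  case Eb' : (blk p') Hs' => [|a' [|b' [|c' [|e' [|]]]]] //= _ [<- <- <- <- Ew].
  rewrite E => -[->]; apply/IH; exists x; split.
    by move=> p0 H; apply: Hs; right.
  by split.
Qed.

Definition buf := option (W * option (W * option W)).
Definition bufseq (bf : buf) : seq T :=
  match bf with
  | None => [::]
  | Some (a, None) => [:: ofi a]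
  | Some (a, Some (b, None)) => [:: ofi a; ofi b]
  | Some (a, Some (b, Some c)) => [:: ofi a; ofi b; ofi c] end.
Definition dl (s : option Q * buf) (t : T) : option Q * buf :=
  match s.2 with
  | None => (s.1, Some (idx t, None))
  | Some (a, None) => (s.1, Some (a, Some (idx t, None)))
  | Some (a, Some (b, None)) => (s.1, Some (a, Some (b, Some (idx t))))
  | Some (a, Some (b, Some c)) => (step s.1 (ofi a) (ofi b) (ofi c) t, None) end.

Lemma regular_ba q0 : regular (ba (Some q0)).
Proof.
apply: (regular_ext (L := fun w => ba (Some q0) (bufseq None ++ w))) => //.
apply: (@regular_rec _ (option Q * buf)%type dl
   (fun s => if s.2 is None then (if s.1 is Some q then F q else false) else false)
   (fun s w => ba s.1 (bufseq s.2 ++ w)) _ _ (Some q0, None)).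
- by case=> [q [[a [[b [c|]]|]]|]] //=; case: q.
- by case=> [q [[a [[b [c|]]|]]|]] t w //=; rewrite ?Hc.
Qed.
End Block4.

Lemma regular_block4 (P T : Type) (W : finType) (idx : T -> W) (ofi : W -> T)
  (Hc : cancel idx ofi) (blk : P -> seq T) (K : seq P -> Prop) :
  (forall p q, size (blk p) = 4 -> blk p = blk q -> p = q) ->
  regular K ->
  regular (fun w => exists x, K x /\ (forall p, List.In p x -> size (blk p) = 4)
                              /\ w = flatten (map blk x)).
Proof.
move=> binj [Q [q0 [d [F HF]]]].
apply: (regular_ext (L := ba blk d F (Some q0))); last exact: (regular_ba Hc blk d F q0).
move=> w; apply: (iff_trans (baE binj d F w q0)); split.
  move=> [x [Hs [-> Fq]]]; exists x; split=> //; exact/HF.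
move=> [x [Kx [Hs ->]]]; exists x; split=> //; split=> //; exact/HF.
Qed.

Section Conv.
Variables (A B : Type).
Definition zl (u : seq A) : seq (option A * option B) := map (fun x => (Some x, None)) u.
Definition zr (v : seq B) : seq (option A * option B) := map (fun y => (None, Some y)) v.
Fixpoint zipo (u : seq A) (v : seq B) : seq (option A * option B) :=
  match u, v with
  | x :: u', y :: v' => (Some x, Some y) :: zipo u' v'
  | _, [::] => zl u
  | [::], _ => zr v end.

Lemma zipo_nil_r u : zipo u [::] = zl u. Proof. by case: u. Qed.
Lemma zipo_nil_l v : zipo [::] v = zr v. Proof. by case: v. Qed.

Lemma map_iotaS X (g : nat -> X) n : map g (iota 0 n.+1) = g 0 :: map (fun i => g i.+1) (iota 0 n).
Proof. by rewrite /= -[1]/(1 + 0) iotaDl -map_comp. Qed.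

Lemma map_iota1 X (g : nat -> X) n : map g (iota 1 n) = map (fun i => g i.+1) (iota 0 n).
Proof. by rewrite -[1]/(1 + 0) iotaDl -map_comp. Qed.

Lemma zr_conv v : zr v = conv [::] v.
Proof.
rewrite /conv max0n; elim: v => [|y v IH] //=.
rewrite map_iota1 /= IH; congr cons; apply: eq_map => i.
by rewrite onth0n.
Qed.

Lemma zl_conv u : zl u = conv u [::].
Proof.
rewrite /conv maxn0; elim: u => [|x u IH] //=.
rewrite map_iota1 /= IH; congr cons; apply: eq_map => i.
by rewrite onth0n.
Qed.

Lemma zipo_conv u v : zipo u v = conv u v.
Proof.
elim: u v => [|x u IH] [|y v]; rewrite ?zipo_nil_l ?zipo_nil_r ?zr_conv ?zl_conv //.
rewrite /= IH /conv /= maxnSS /= map_iota1 //.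
Qed.

Lemma size_zipo u v : size (zipo u v) = maxn (size u) (size v).
Proof. by rewrite zipo_conv size_map size_iota. Qed.

Lemma pmap_fst_zl u : pmap (fun q => q.1) (zl u) = u.
Proof. by elim: u => //= x u ->. Qed.
Lemma pmap_snd_zl u : pmap (fun q => q.2) (zl u) = [::].
Proof. by elim: u. Qed.
Lemma pmap_fst_zr v : pmap (fun q => q.1) (zr v) = [::].
Proof. by elim: v. Qed.
Lemma pmap_snd_zr v : pmap (fun q => q.2) (zr v) = v.
Proof. by elim: v => //= x v ->. Qed.

Lemma pmap_fst_zipo u v : pmap (fun q => q.1) (zipo u v) = u.
Proof.
elim: u v => [|x u IH] [|y v];
  rewrite ?zipo_nil_l ?zipo_nil_r ?pmap_fst_zl ?pmap_fst_zr //.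
by rewrite /= IH.
Qed.

Lemma pmap_snd_zipo u v : pmap (fun q => q.2) (zipo u v) = v.
Proof.
elim: u v => [|x u IH] [|y v];
  rewrite ?zipo_nil_l ?zipo_nil_r ?pmap_snd_zl ?pmap_snd_zr //.
by rewrite /= IH.
Qed.

Lemma conv_inj (u u' : seq A) (v v' : seq B) : conv u v = conv u' v' -> u = u' /\ v = v'.
Proof.
rewrite -!zipo_conv => E.
split.
  by rewrite -(pmap_fst_zipo u v) E pmap_fst_zipo.
by rewrite -(pmap_snd_zipo u v) E pmap_snd_zipo.
Qed.

Lemma zipo_nonnone (u : seq A) (v : seq B) q : List.In q (zipo u v) -> isSome q.1 || isSome q.2.
Proof.
have Hl : forall u', List.In q (zl u') -> isSome q.1 || isSome q.2.
  by elim=> //= x u' IH [<-|/IH].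
have Hr : forall v', List.In q (zr v') -> isSome q.1 || isSome q.2.
  by elim=> //= x u' IH [<-|/IH].
elim: u v => [|x u IH] [|y v]; rewrite ?zipo_nil_l ?zipo_nil_r; try by [apply: Hl | apply: Hr].
by move=> /= [<-|/IH].
Qed.

Fixpoint zsb (e1 e2 : bool) (x : seq (option A * option B)) : bool :=
  if x is q :: x' then
    [&& isSome q.1 || isSome q.2, ~~ (e1 && isSome q.1), ~~ (e2 && isSome q.2) &
        zsb (e1 || ~~ isSome q.1) (e2 || ~~ isSome q.2) x']
  else true.

Lemma zsbP e1 e2 x : zsb e1 e2 x <->
  exists u v, x = zipo u v /\ (e1 -> u = [::]) /\ (e2 -> v = [::]).
Proof.
elim: x e1 e2 => [|[o1 o2] x IH] e1 e2 /=.
  by split=> // _; exists [::], [::].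
case: o1 => [a|]; case: o2 => [b|] /=.
- rewrite !andbT !orbF; split.
    case/and3P=> /negbTE -> /negbTE -> /IH [u [v [-> [_ _]]]].
    by exists (a :: u), (b :: v).
  move=> [[|a' u] [[|b' v] [//= [Ea Eb E] [H1 H2]]]].
  have -> : e1 = false by case: e1 H1 => // /(_ erefl).
  have -> : e2 = false by case: e2 H2 => // /(_ erefl).
  by apply/IH; exists u, v.
- rewrite !andbT !andbF !orbT orbF /=; split.
    case/andP=> /negbTE -> /IH [u [v [-> [_ H2]]]].
    by exists (a :: u), [::]; rewrite H2 //= zipo_nil_r.
  move=> [[|a' u] [[|b' v] [//= E [H1 H2]]]].
  have -> : e1 = false by case: e1 H1 => // /(_ erefl).
  move: E; rewrite -zipo_nil_r => -[Ea E]; apply/IH; exists u, [::]; by split.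
- rewrite !andbT !andbF !orbT orbF /=; split.
    case/andP=> /negbTE -> /IH [u [v [-> [H1 _]]]].
    by exists [::], (b :: v); rewrite H1 // !zipo_nil_l.
  move=> [[|a' u] [[|b' v] [//= E [H1 H2]]]].
  have -> : e2 = false by case: e2 H2 => // /(_ erefl).
  move: E; rewrite -zipo_nil_l => -[Ea E]; apply/IH; exists [::], v; by split.
- split=> // [[[|a' u] [[|b' v] [//= E _]]]].
Qed.

Lemma regular_ZS : regular (fun x : seq (option A * option B) => exists u v, x = conv u v).
Proof.
apply: (regular_ext (L := fun x => (true && zsb false false x : Prop))).
  move=> x; split=> [/zsbP [u [v [-> _]]]|[u [v ->]]].
    by exists u, v; rewrite zipo_conv.
  by apply/zsbP; exists u, v; rewrite zipo_conv.
apply: (@regular_rec _ (bool * bool * bool)%type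
  (fun s q => (s.1.1 || ~~ isSome q.1, s.1.2 || ~~ isSome q.2,
               s.2 && [&& isSome q.1 || isSome q.2, ~~ (s.1.1 && isSome q.1) &
                          ~~ (s.1.2 && isSome q.2)]))
  (fun s => s.2) (fun s x => s.2 && zsb s.1.1 s.1.2 x) _ _ (false, false, true)).
- by case=> [[e1 e2] ok] /=; rewrite andbT.
- by case=> [[e1 e2] ok] q x /=; rewrite !andbA.
Qed.
End Conv.

Lemma pmap_map_comp X Y Z (f : Y -> option Z) (g : X -> Y) s :
  pmap f (map g s) = pmap (fun x => f (g x)) s.
Proof. by elim: s => //= x s ->. Qed.

Lemma pmap_nones Y (g : nat -> option Y) s :
  (forall i, i \in s -> g i = None) -> pmap g s = [::].
Proof.
elim: s => //= x s IH H; rewrite H ?mem_head //= IH // => i Hi.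
by apply: H; rewrite in_cons Hi orbT.
Qed.

Lemma pmap_somes Y (g : nat -> option Y) (h : nat -> Y) s :
  (forall i, i \in s -> g i = Some (h i)) -> pmap g s = map h s.
Proof.
elim: s => //= x s IH H; rewrite H ?mem_head //= IH // => i Hi.
by apply: H; rewrite in_cons Hi orbT.
Qed.

Lemma pmap_iota Y (g : nat -> option Y) m M : m <= M ->
  (forall i, m <= i -> g i = None) -> pmap g (iota 0 M) = pmap g (iota 0 m).
Proof.
move=> le H; rewrite -(subnKC le) iotaD pmap_cat add0n (@pmap_nones _ _ (iota m _)) ?cats0 //.
by move=> i; rewrite mem_iota => /andP [/H].
Qed.

Lemma onth_iota m n i : onth (iota m n) i = if i < n then Some (m + i) else None.
Proof.
elim: n m i => [|n IH] m [|i] //=; first by rewrite addn0.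
by rewrite IH ltnS addSnnS.
Qed.

Lemma size_conv A B (u : seq A) (v : seq B) : size (conv u v) = maxn (size u) (size v).
Proof. by rewrite /conv size_map size_iota. Qed.

Lemma onth_conv A B (u : seq A) (v : seq B) i :
  onth (conv u v) i = if i < maxn (size u) (size v) then Some (onth u i, onth v i) else None.
Proof. by rewrite /conv onth_map onth_iota; case: ifP. Qed.

Lemma obind_fst_onth_conv A B (u : seq A) (v : seq B) i :
  obind (fun p => p.1) (onth (conv u v) i) = onth u i.
Proof.
rewrite onth_conv; case: ifP => //= /negbT; rewrite -leqNgt geq_max => /andP [H _].
by rewrite onth_default.
Qed.

Lemma obind_snd_onth_conv A B (u : seq A) (v : seq B) i :
  obind (fun p => p.2) (onth (conv u v) i) = onth v i.
Proof.
rewrite onth_conv; case: ifP => //= /negbT; rewrite -leqNgt geq_max => /andP [_ H].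
by rewrite onth_default.
Qed.

Definition hh1 A B (q : option (option A * option B) * option (option A * option B))
  : option (option A * option A) :=
  let a := obind (fun p => p.1) q.1 in let b := obind (fun p => p.1) q.2 in
  if isSome a || isSome b then Some (a, b) else None.
Definition hh2 A B (q : option (option A * option B) * option (option A * option B))
  : option (option B * option B) :=
  let a := obind (fun p => p.2) q.1 in let b := obind (fun p => p.2) q.2 in
  if isSome a || isSome b then Some (a, b) else None.

Lemma pmap_hh_conv A (u u' : seq A) M (g : nat -> option A) (g' : nat -> option A) :
  maxn (size u) (size u') <= M ->
  (forall i, g i = onth u i) -> (forall i, g' i = onth u' i) ->
  pmap (fun i => let a := g i in let b := g' i in
                 if isSome a || isSome b then Some (a, b) else None) (iota 0 M)
  = conv u u'.
Proof.
move=> le Hg Hg'; rewrite (pmap_iota le); last first.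
  move=> i; rewrite geq_max Hg Hg' => /andP [H1 H2].
  by rewrite !onth_default.
rewrite /conv; apply: pmap_somes => i; rewrite mem_iota /= Hg Hg' => Hi.
by move: Hi; rewrite !onthTE /= add0n leq_max => ->.
Qed.

Lemma pmap_hh1_conv A B (u u' : seq A) (v v' : seq B) :
  pmap (@hh1 A B) (conv (conv u v) (conv u' v')) = conv u u'.
Proof.
rewrite {1}/conv pmap_map_comp /hh1 /=; apply: pmap_hh_conv.
- rewrite !size_conv.
  by rewrite geq_max !leq_max !leqnn ?orbT.
- exact: obind_fst_onth_conv.
- exact: obind_fst_onth_conv.
Qed.

Lemma pmap_hh2_conv A B (u u' : seq A) (v v' : seq B) :
  pmap (@hh2 A B) (conv (conv u v) (conv u' v')) = conv v v'.
Proof.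
rewrite {1}/conv pmap_map_comp /hh2 /=; apply: pmap_hh_conv.
- rewrite !size_conv.
  by rewrite geq_max !leq_max !leqnn ?orbT.
- exact: obind_snd_onth_conv.
- exact: obind_snd_onth_conv.
Qed.

Section Blocks.
Variables (P T : Type) (blk : P -> seq T) (k : nat).
Definition oblk (o : option P) := if o is Some p then blk p else [::].
Definition blk2 (q : option P * option P) := zipo (oblk q.1) (oblk q.2).

Lemma zl_cat A B (a b : seq A) : zl B (a ++ b) = zl B a ++ zl B b.
Proof. exact: map_cat. Qed.
Lemma zr_cat A B (a b : seq B) : zr A (a ++ b) = zr A a ++ zr A b.
Proof. exact: map_cat. Qed.

Lemma zipo_cat A B (a r : seq A) (b r' : seq B) : size a = size b ->
  zipo (a ++ r) (b ++ r') = zipo a b ++ zipo r r'.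
Proof. by elim: a b => [|x a IH] [|y b] //= [/IH ->]. Qed.

Lemma zl_blocks X : zl T (flatten (map blk X)) = flatten (map blk2 (zl P X)).
Proof.
elim: X => //= p X IH; rewrite zl_cat IH /blk2 /=; congr cat.
by case: (blk p).
Qed.

Lemma zr_blocks X : zr T (flatten (map blk X)) = flatten (map blk2 (zr P X)).
Proof.
elim: X => //= p X IH; rewrite zr_cat IH /blk2 /=; congr cat.
by case: (blk p).
Qed.

Lemma conv_blocks X X' :
  (forall p, List.In p X -> size (blk p) = k) ->
  (forall p, List.In p X' -> size (blk p) = k) ->
  conv (flatten (map blk X)) (flatten (map blk X')) = flatten (map blk2 (conv X X')).
Proof.
rewrite -!zipo_conv; elim: X X' => [|p X IH] [|p' X'] H H'.
- by [].
- by rewrite [flatten (map blk [::])]/= !zipo_nil_l zr_blocks.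
- by rewrite [flatten (map blk [::])]/= !zipo_nil_r zl_blocks.
rewrite /= zipo_cat; last by rewrite H ?H' //; left.
rewrite IH // => q Hq; [apply: H | apply: H']; by right.
Qed.
End Blocks.

Section GroupLemmas.
Variable G : Grp.
Implicit Types x y z : G.
Lemma mulgVr x : gmul x (ginv x) = gone G.
Proof.
rewrite -[LHS]gmul1 -(gmulV (ginv x)) -gmulA (gmulA (ginv x)) gmulV gmul1.
by rewrite gmulV.
Qed.
Lemma mulg1r x : gmul x (gone G) = x.
Proof. by rewrite -(gmulV x) gmulA mulgVr gmul1. Qed.
Lemma invgK x : ginv (ginv x) = x.
Proof. by rewrite -[LHS]mulg1r -(gmulV x) gmulA gmulV gmul1. Qed.
Lemma invg1 : ginv (gone G) = gone G.
Proof. by rewrite -[LHS]mulg1r gmulV. Qed.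
Lemma mulgK x a : gmul (gmul x a) (ginv a) = x.
Proof. by rewrite -gmulA mulgVr mulg1r. Qed.
Lemma mulgKV x a : gmul (gmul x (ginv a)) a = x.
Proof. by rewrite -gmulA gmulV mulg1r. Qed.
End GroupLemmas.

Lemma conv_swap A B (u : seq A) (v : seq B) : map (fun t => (t.2, t.1)) (conv u v) = conv v u.
Proof. by rewrite /conv -map_comp maxnC. Qed.

Lemma zipo_diag A (u : seq A) : zipo u u = map (fun s => (Some s, Some s)) u.
Proof. by elim: u => //= x u ->. Qed.

Definition Xlist (G : Grp) (A : seq G) : seq G := gone G :: List.app A (List.map (@ginv G) A).

Lemma rec_coord (G : Grp) (A : seq G) Sig (sg : Sig -> G) (L : seq Sig -> Prop) (psi : seq Sig -> G) :
  cayley_automatic A sg L psi -> forall x, List.In x (Xlist A) ->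
  fa_recognizable (fun u u' => L u /\ L u' /\ psi u' = gmul (psi u) x).
Proof.
case=> Lreg Lsur Linj Lmul x /= [<-|/List.in_app_iff [Hx|/List.in_map_iff [a [<- Ha]]]].
- rewrite /fa_recognizable.
  apply: (regular_ext (L := fun z => exists u, L u /\ z = map (fun s => (Some s, Some s)) u)).
    move=> z; split.
      by move=> [u [Lu ->]]; exists u, u; rewrite -zipo_conv zipo_diag mulg1r.
    move=> [u [u' [[Lu [Lu' E]]] ->]]; rewrite mulg1r in E.
    by exists u; rewrite (Linj _ _ Lu' Lu E) -zipo_conv zipo_diag.
  by apply: regular_map_inj => // s t [].
- exact: Lmul.
- have := regular_pmap (fun t => Some (t.2, t.1)) (Lmul a Ha).
  apply: regular_ext => z; split.
    move=> [u [u' [[Lu [Lu' E]] Ez]]]; exists u', u; split.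
      by split=> //; split=> //; rewrite E mulgK.
    rewrite -conv_swap -Ez; elim: {Ez} z => //= -[t1 t2] z IH /=.
    by rewrite -IH.
  move=> [u [u' [[Lu [Lu' E]] Ez]]]; exists u', u; split.
    by split=> //; split=> //; rewrite E mulgKV.
  by rewrite -conv_swap -Ez; elim: {Ez} z => //= -[t1 t2] z IH /=; rewrite ?IH.
Qed.

Lemma evalw_cat (G : Grp) T (sg : T -> G) a b :
  evalw sg (a ++ b) = gmul (evalw sg a) (evalw sg b).
Proof. by elim: a => [|x a IH] /=; rewrite ?gmul1 // IH gmulA. Qed.

Lemma Forall_cat T (P : T -> Prop) a b : List.Forall P a -> List.Forall P b -> List.Forall P (a ++ b).
Proof. by elim: a => //= x a IH Ha Hb; inversion Ha; constructor => //; apply: IH. Qed.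

Lemma Forall_map T U (P : U -> Prop) (g : T -> U) (Q : T -> Prop) a :
  (forall x, Q x -> P (g x)) -> List.Forall Q a -> List.Forall P (map g a).
Proof. by move=> H; elim: a => //= x a IH Ha; inversion Ha; constructor; auto. Qed.

Lemma In_nth_ex T (d : T) s z : List.In z s -> exists i, i < size s /\ nth d s i = z.
Proof.
elim: s => //= x s IH [<-|/IH [i [Hi E]]]; first by exists 0.
by exists i.+1.
Qed.

Lemma nth_In T (d : T) s i : i < size s -> List.In (nth d s i) s.
Proof. by elim: s i => //= x s IH [|i] /=; [left | move/IH; right]. Qed.

Lemma Xlist_inv (G : Grp) (A : seq G) x : List.In x (Xlist A) -> List.In (ginv x) (Xlist A).
Proof.
move=> /= [<-|/List.in_app_iff [H|/List.in_map_iff [a [<- Ha]]]].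
- by left; rewrite invg1.
- by right; apply/List.in_app_iff; right; apply: List.in_map.
- by right; apply/List.in_app_iff; left; rewrite invgK.
Qed.

Lemma Xlist_inS (G : Grp) (A : seq G) x : inS A x -> List.In x (Xlist A).
Proof.
move=> [a [Ha [->|->]]]; right; apply/List.in_app_iff; [left|right] => //.
exact: List.in_map.
Qed.

Lemma Xlist_one (G : Grp) (A : seq G) : List.In (gone G) (Xlist A).
Proof. by left. Qed.

Section Prod.
Variables (G1 G2 : Grp).
Variables (A1 : seq G1) (Sig1 : Type) (sg1 : Sig1 -> G1) (L1 : seq Sig1 -> Prop) (psi1 : seq Sig1 -> G1).
Hypotheses (inj1 : forall s t, sg1 s = sg1 t -> s = t) (img1 : forall x, inS A1 x <-> exists s, sg1 s = x)
  (ca1 : cayley_automatic A1 sg1 L1 psi1).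
Variables (A2 : seq G2) (Sig2 : Type) (sg2 : Sig2 -> G2) (L2 : seq Sig2 -> Prop) (psi2 : seq Sig2 -> G2).
Hypotheses (inj2 : forall s t, sg2 s = sg2 t -> s = t) (img2 : forall x, inS A2 x <-> exists s, sg2 s = x)
  (ca2 : cayley_automatic A2 sg2 L2 psi2).

Notation G := (prodGrp G1 G2).

Definition Ap : seq G :=
  List.flat_map (fun x => List.map (fun y => ((x, y) : gcar G)) (Xlist A2)) (Xlist A1).

Lemma inAp x y : List.In x (Xlist A1) -> List.In y (Xlist A2) -> List.In ((x, y) : gcar G) Ap.
Proof.
move=> Hx Hy; apply/List.in_flat_map; exists x; split=> //.
by apply: List.in_map.
Qed.

Lemma Ap_inv (z : G) : List.In z Ap -> List.In z.1 (Xlist A1) /\ List.In z.2 (Xlist A2).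
Proof.
by move/List.in_flat_map => [x [Hx /List.in_map_iff [y [<- Hy]]]].
Qed.

Lemma inS_Ap (z : G) : inS Ap z <-> List.In z Ap.
Proof.
split; last by move=> H; exists z; split=> //; left.
move=> [a [Ha [->|->]]] //.
have [H1 H2] := Ap_inv Ha.
by case: a Ha H1 H2 => a1 a2 /= _ H1 H2; apply: inAp; apply: Xlist_inv.
Qed.

Lemma sg1_X s : List.In (sg1 s) (Xlist A1).
Proof. by apply: Xlist_inS; apply/img1; exists s. Qed.
Lemma sg2_X s : List.In (sg2 s) (Xlist A2).
Proof. by apply: Xlist_inS; apply/img2; exists s. Qed.

Lemma lift_words w1 w2 : List.Forall (inS A1) w1 -> List.Forall (inS A2) w2 ->
  exists w : seq G, List.Forall (inS Ap) w /\
    evalw (fun x : G => x) w = ((evalw (fun x => x) w1, evalw (fun x => x) w2) : gcar G) /\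
    size w = size w1 + size w2.
Proof.
move=> H1 H2.
exists (map (fun x => ((x, gone G2) : gcar G)) w1 ++ map (fun y => ((gone G1, y) : gcar G)) w2).
split; [|split].
- apply: Forall_cat.
    apply: (Forall_map (Q := inS A1)) H1 => x Hx; apply/inS_Ap.
    by apply: inAp; [apply: Xlist_inS | apply: Xlist_one].
  apply: (Forall_map (Q := inS A2)) H2 => x Hx; apply/inS_Ap.
  by apply: inAp; [apply: Xlist_one | apply: Xlist_inS].
- rewrite evalw_cat.
  have -> : evalw (fun x : G => x) (map (fun x => ((x, gone G2) : gcar G)) w1)
           = ((evalw (fun x => x) w1, gone G2) : gcar G).
    by elim: w1 {H1} => //= x w1 ->; rewrite gmul1.
  have -> : evalw (fun x : G => x) (map (fun y => ((gone G1, y) : gcar G)) w2)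
           = ((gone G1, evalw (fun x => x) w2) : gcar G).
    by elim: w2 {H2} => //= x w2 ->; rewrite gmul1.
  by rewrite /= gmul1 mulg1r.
- by rewrite size_cat !size_map.
Qed.

Lemma gen_prod : generates A1 -> generates A2 -> generates Ap.
Proof.
move=> g1 g2 [x y]; have [w1 [H1 E1]] := g1 x; have [w2 [H2 E2]] := g2 y.
have [w [H [E _]]] := lift_words H1 H2.
by exists w; split=> //; rewrite E E1 E2.
Qed.


Section Nontriv.
Variable m : gcar G.
Hypotheses (Hm : List.In m Ap) (Hm1 : m <> gone G).

Definition Sigp := {z : gcar G | inS Ap z}.
Definition sgp (s : Sigp) : gcar G := proj1_sig s.

Lemma one_Ap : inS Ap (gone G).
Proof. by apply/inS_Ap; apply: inAp; apply: Xlist_one. Qed.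

Definition toT (z : gcar G) : Sigp :=
  match EM (inS Ap z) with left H => exist _ z H | right _ => exist _ (gone G) one_Ap end.

Lemma toT_val z : inS Ap z -> sgp (toT z) = z.
Proof. by rewrite /toT; case: EM. Qed.

Lemma toT_sg s : toT (sgp s) = s.
Proof.
case: s => z H; rewrite /toT /=; case: EM => [H'|//].
by rewrite (proof_irrelevance _ H H').
Qed.

Lemma sgp_inj s t : sgp s = sgp t -> s = t.
Proof. by move=> E; rewrite -(toT_sg s) E toT_sg. Qed.

Definition oval1 (o : option Sig1) : G1 := if o is Some s then sg1 s else gone G1.
Definition oval2 (o : option Sig2) : G2 := if o is Some s then sg2 s else gone G2.

Definition Pp := (option Sig1 * option Sig2)%type.
Definition pval (p : Pp) : gcar G := (oval1 p.1, oval2 p.2).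

Lemma pval_Ap p : inS Ap (pval p).
Proof.
apply/inS_Ap; case: p => [o1 o2]; apply: inAp.
  by case: o1 => [s|]; [apply: sg1_X | apply: Xlist_one].
by case: o2 => [s|]; [apply: sg2_X | apply: Xlist_one].
Qed.

Definition te := toT (gone G).
Definition tm := toT m.
Definition tmi := toT (ginv m).

Lemma m_inS : inS Ap m. Proof. exact/inS_Ap. Qed.
Lemma mi_inS : inS Ap (ginv m). Proof. by exists m; split=> //; right. Qed.

Lemma tm_te : tm <> te.
Proof. by move=> /(congr1 sgp); rewrite !toT_val //; [apply: one_Ap|apply: m_inS]. Qed.

Definition encK (p : Pp) (t : Sigp) : seq Sigp :=
  match p with
  | (Some _, Some _) => [:: te; te; te; t]
  | (Some _, None) => [:: te; tm; tmi; t]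
  | (None, Some _) => [:: tm; tmi; te; t]
  | (None, None) => [:: tm; tmi; tm; tmi] end.
Definition encP (p : Pp) : seq Sigp := encK p (toT (pval p)).

Lemma size_encP p : size (encP p) = 4.
Proof. by rewrite /encP; case: p => [[?|] [?|]]. Qed.

Lemma encP_inj p q : encP p = encP q -> p = q.
Proof.
have tme := tm_te; have tem : te <> tm by move=> E; apply: tme.
have pv : forall p q, toT (pval p) = toT (pval q) -> oval1 p.1 = oval1 q.1 /\ oval2 p.2 = oval2 q.2.
  move=> p0 q0 /(congr1 sgp); rewrite !toT_val; try apply: pval_Ap.
  by case.
rewrite /encP; case: p => [[s1|] [s2|]]; case: q => [[t1|] [t2|]] //= [] //;
  try (move=> *; by exfalso; auto);
  move=> /pv /= [H1 H2]; rewrite ?(inj1 H1) ?(inj2 H2) //.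
Qed.

Lemma evalw_encP p r : evalw sgp (encP p ++ r) = gmul (pval p) (evalw sgp r).
Proof.
have Ve : sgp te = gone G by rewrite toT_val //; apply: one_Ap.
have Vm : sgp tm = m by rewrite toT_val //; apply: m_inS.
have Vmi : sgp tmi = ginv m by rewrite toT_val //; apply: mi_inS.
have Vp : sgp (toT (pval p)) = pval p by rewrite toT_val //; apply: pval_Ap.
rewrite /encP; move: (toT (pval p)) Vp => t Vt.
have ev : forall (x : Sigp) w, evalw sgp (x :: w) = gmul (sgp x) (evalw sgp w) by [].
case: p Vt => [[s1|] [s2|]] Vt; rewrite [encK _ _]/= !cat_cons cat0s !ev ?Ve ?Vm ?Vmi ?Vt ?gmul1 //.
- by rewrite gmulA mulgVr gmul1.
- by rewrite gmulA mulgVr gmul1.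
- by rewrite gmulA mulgVr gmul1 gmulA mulgVr gmul1.
Qed.

Definition encs (x : seq Pp) : seq Sigp := flatten (map encP x).

Lemma evalw_encs x : evalw sgp (encs x) =
  ((evalw sg1 (pmap (fun q => q.1) x), evalw sg2 (pmap (fun q => q.2) x)) : gcar G).
Proof.
have ec : forall p x, encs (p :: x) = encP p ++ encs x by [].
elim: x => //= p x IH; rewrite ec evalw_encP IH.
by case: p => [[s1|] [s2|]] /=; rewrite ?gmul1.
Qed.

Lemma size_encs x : size (encs x) = 4 * size x.
Proof.
have ec : forall p x, encs (p :: x) = encP p ++ encs x by [].
by elim: x => //= p x IH; rewrite ec size_cat size_encP IH mulnS.
Qed.

Lemma encs_inj x x' : encs x = encs x' -> x = x'.
Proof.
elim: x x' => [|p x IH] [|p' x'] //=.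
- by rewrite /encs /=; case: (encP p') (size_encP p').
- by rewrite /encs /=; case: (encP p) (size_encP p).
rewrite /encs /= => E.
have E1 : encP p = encP p'.
  by move: (congr1 (take 4) E); rewrite !take_size_cat ?size_encP.
rewrite (encP_inj E1); congr cons; apply: IH.
by move: (congr1 (drop 4) E); rewrite !drop_size_cat ?size_encP.
Qed.

Definition Lp (w : seq Sigp) := exists u v, L1 u /\ L2 v /\ w = encs (conv u v).

Definition psip (w : seq Sigp) : gcar G :=
  match EM (exists uv : seq Sig1 * seq Sig2, L1 uv.1 /\ L2 uv.2 /\ w = encs (conv uv.1 uv.2)) with
  | left H => let uv := proj1_sig (constructive_indefinite_description _ H) in
              ((psi1 uv.1, psi2 uv.2) : gcar G)
  | right _ => gone G end.

Lemma psip_enc u v : L1 u -> L2 v -> psip (encs (conv u v)) = ((psi1 u, psi2 v) : gcar G).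
Proof.
move=> Lu Lv; rewrite /psip; case: EM => [H|[]]; last by exists (u, v).
case: constructive_indefinite_description => [[u' v'] /= [_ [_ /encs_inj /conv_inj [<- <-]]]].
done.
Qed.


Definition idxp (s : Sigp) : 'I_(size Ap).
Proof.
apply: (proj1_sig (constructive_indefinite_description
  (fun i : 'I_(size Ap) => nth (gone G) Ap i = sgp s) _)).
case: s => z /= /inS_Ap /(In_nth_ex (gone G)) [i [Hi E]].
by exists (Ordinal Hi).
Defined.

Definition ofip (i : 'I_(size Ap)) : Sigp := toT (nth (gone G) Ap i).

Lemma idxpK : cancel idxp ofip.
Proof.
move=> s; rewrite /ofip /idxp; case: constructive_indefinite_description => i /= ->.
exact: toT_sg.
Qed.

Definition idx2 (t : option Sigp * option Sigp) : option 'I_(size Ap) * option 'I_(size Ap) :=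
  (omap idxp t.1, omap idxp t.2).
Definition ofi2 (t : option 'I_(size Ap) * option 'I_(size Ap)) : option Sigp * option Sigp :=
  (omap ofip t.1, omap ofip t.2).
Lemma idx2K : cancel idx2 ofi2.
Proof. by case=> [[a|] [b|]]; rewrite /idx2 /ofi2 /= ?idxpK. Qed.

Lemma encs_size4 x p : List.In p x -> size (encP p) = 4.
Proof. by move=> _; apply: size_encP. Qed.

Definition Kp (x : seq Pp) := exists u v, L1 u /\ L2 v /\ x = conv u v.

Lemma Kp_regular : regular Kp.
Proof.
apply: (regular_ext (L := fun x => (exists u v, x = conv u v) /\
   (L1 (pmap (fun q => q.1) x) /\ L2 (pmap (fun q => q.2) x)))).
  move=> x; split.
    move=> [[u [v ->]] [H1 H2]]; exists u, v.
    by rewrite -zipo_conv pmap_fst_zipo pmap_snd_zipo in H1 H2.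
  move=> [u [v [H1 [H2 ->]]]]; split; first by exists u, v.
  by rewrite -zipo_conv pmap_fst_zipo pmap_snd_zipo.
apply: regular_and; first exact: regular_ZS.
case: ca1 => [? _ _ _]; case: ca2 => [? _ _ _].
by apply: regular_and; apply: regular_pmap.
Qed.

Lemma Lp_regular : regular Lp.
Proof.
apply: (regular_ext (L := fun w => exists x, Kp x /\
   (forall p, List.In p x -> size (encP p) = 4) /\ w = flatten (map encP x))).
  move=> w; split.
    by move=> [x [[u [v [Lu [Lv ->]]]] [_ ->]]]; exists u, v.
  move=> [u [v [Lu [Lv ->]]]]; exists (conv u v); split; first by exists u, v.
  by split=> // p _; apply: size_encP.
apply: (regular_block4 idxpK); last exact: Kp_regular.
by move=> p q _; apply: encP_inj.
Qed.

Lemma oblk_inj o o' : oblk encP o = oblk encP o' -> o = o'.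
Proof.
case: o => [p|]; case: o' => [p'|] //=.
- by move/encP_inj ->.
- by move/(congr1 size); rewrite size_encP.
- by move/(congr1 size); rewrite size_encP.
Qed.

Lemma blk2_inj q q' : blk2 encP q = blk2 encP q' -> q = q'.
Proof.
rewrite /blk2 => E.
have E1 := congr1 (pmap (fun t => t.1)) E; rewrite !pmap_fst_zipo in E1.
have E2 := congr1 (pmap (fun t => t.2)) E; rewrite !pmap_snd_zipo in E2.
by case: q q' E1 E2 {E} => [o1 o2] [o1' o2'] /= /oblk_inj -> /oblk_inj ->.
Qed.

Lemma blk2_size X X' q : List.In q (conv X X') -> size (blk2 encP q) = 4.
Proof.
rewrite -zipo_conv => /zipo_nonnone; rewrite /blk2 size_zipo.
by case: q => [[p|] [p'|]] //= _; rewrite ?size_encP.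
Qed.

Lemma mul_rec a : List.In a Ap ->
  fa_recognizable (fun w w' => Lp w /\ Lp w' /\ psip w' = gmul (psip w) a).
Proof.
move=> Ha; have [Hx Hy] := Ap_inv Ha.
have R1 := rec_coord ca1 Hx; have R2 := rec_coord ca2 Hy.
pose K2 x2 := exists u v u' v', (L1 u /\ L1 u' /\ psi1 u' = gmul (psi1 u) a.1) /\
  (L2 v /\ L2 v' /\ psi2 v' = gmul (psi2 v) a.2) /\ x2 = conv (conv u v) (conv u' v').
have K2reg : regular K2.
  apply: (regular_ext (L := fun x2 => (exists X X', x2 = conv X X') /\
    ((exists u v, pmap (fun t => t.1) x2 = conv u v) /\
     ((exists u v, pmap (fun t => t.2) x2 = conv u v) /\
      ((exists u u', (L1 u /\ L1 u' /\ psi1 u' = gmul (psi1 u) a.1) /\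
          pmap (@hh1 Sig1 Sig2) x2 = conv u u') /\
       (exists v v', (L2 v /\ L2 v' /\ psi2 v' = gmul (psi2 v) a.2) /\
          pmap (@hh2 Sig1 Sig2) x2 = conv v v')))))).
    move=> x2; split.
      move=> [[X [X' ->]] [[u [v EX]] [[u' [v' EX']] [[p [p' [H1 E1]]] [q [q' [H2 E2]]]]]]].
      rewrite -zipo_conv pmap_fst_zipo in EX; rewrite -zipo_conv pmap_snd_zipo in EX'.
      subst X X'.
      rewrite pmap_hh1_conv in E1; rewrite pmap_hh2_conv in E2.
      have [e1 e2] := conv_inj E1; have [e3 e4] := conv_inj E2; rewrite -e1 -e2 in H1; rewrite -e3 -e4 in H2.
      by exists u, v, u', v'.
    move=> [u [v [u' [v' [H1 [H2 ->]]]]]]; split; first by exists (conv u v), (conv u' v').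
    split; first by exists u, v; rewrite -zipo_conv pmap_fst_zipo.
    split; first by exists u', v'; rewrite -[conv (conv u v) _]zipo_conv pmap_snd_zipo.
    split; first by exists u, u'; rewrite pmap_hh1_conv.
    by exists v, v'; rewrite pmap_hh2_conv.
  apply: regular_and; first exact: regular_ZS.
  apply: regular_and.
    exact: (regular_pmap (fun t => t.1) (@regular_ZS Sig1 Sig2)).
  apply: regular_and.
    exact: (regular_pmap (fun t => t.2) (@regular_ZS Sig1 Sig2)).
  apply: regular_and.
    exact: (regular_pmap (@hh1 Sig1 Sig2) R1).
  exact: (regular_pmap (@hh2 Sig1 Sig2) R2).
have := regular_block4 idx2K (blk := blk2 encP) (fun q q' _ => @blk2_inj q q') K2reg.
apply: regular_ext => z; split.
  move=> [x2 [[u [v [u' [v' [[Lu [Lu' E1]] [[Lv [Lv' E2]] ->]]]]]] [_ ->]]].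
  exists (encs (conv u v)), (encs (conv u' v')); split.
    split; first by exists u, v.
    split; first by exists u', v'.
    by rewrite !psip_enc // E1 E2.
  by rewrite (conv_blocks (k:=4)) // => p _; apply: size_encP.
move=> [w [w' [[[u [v [Lu [Lv ->]]]] [[u' [v' [Lu' [Lv' ->]]]] E]] ->]]].
rewrite !psip_enc // in E.
exists (conv (conv u v) (conv u' v')); split.
  exists u, v, u', v'; split; first by split=> //; split=> //; exact: (congr1 (fun z : gcar G => z.1) E).
  split; first by split=> //; split=> //; exact: (congr1 (fun z : gcar G => z.2) E).
  done.
split; first by move=> q; apply: blk2_size.
by rewrite (conv_blocks (k:=4)) // => p _; apply: size_encP.
Qed.

Lemma Lp_dist u v r1 r2 : L1 u -> L2 v ->
  dA_le A1 (evalw sg1 u) (psi1 u) r1 -> dA_le A2 (evalw sg2 v) (psi2 v) r2 ->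
  dA_le Ap (evalw sgp (encs (conv u v))) (psip (encs (conv u v))) (r1 + r2)%R.
Proof.
move=> Lu Lv [w1 [F1 [E1 S1]]] [w2 [F2 [E2 S2]]].
have [w [F [E S]]] := lift_words F1 F2.
exists w; split=> //; split.
  rewrite E E1 E2 psip_enc // evalw_encs -zipo_conv pmap_fst_zipo pmap_snd_zipo.
  by [].
by rewrite S plus_INR; apply: Rplus_le_compat.
Qed.

Lemma nontriv_inB (Q : nat) (f : nat -> R) : frakF Q f -> generates A1 -> generates A2 ->
  (exists (N K M : nat), (0 < K)%N /\ (0 < M)%N /\ forall n, (N <= n)%N -> (Q <= n)%N ->
        cafun_le A1 sg1 L1 psi1 n (INR K * f (muln M n))%R) ->
  (exists (N K M : nat), (0 < K)%N /\ (0 < M)%N /\ forall n, (N <= n)%N -> (Q <= n)%N ->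
        cafun_le A2 sg2 L2 psi2 n (INR K * f (muln M n))%R) ->
  inB Q f G.
Proof.
move=> [fmon fpos] gen1 gen2 [N1 [K1 [M1 [K1p [M1p B1]]]]] [N2 [K2 [M2 [K2p [M2p B2]]]]].
exists Ap; split; first exact: gen_prod.
exists Sigp, sgp; split; first exact: sgp_inj.
split.
  move=> x; split; first by move=> H; exists (exist _ x H).
  by move=> [[z H] <-].
exists Lp, psip; split.
  case: ca1 => _ sur1 inj1' _; case: ca2 => _ sur2 inj2' _.
  split.
  - exact: Lp_regular.
  - move=> [g1 g2]; have [u [Lu Eu]] := sur1 g1; have [v [Lv Ev]] := sur2 g2.
    by exists (encs (conv u v)); split; [exists u, v | rewrite psip_enc // Eu Ev].
  - move=> w w' [u [v [Lu [Lv ->]]]] [u' [v' [Lu' [Lv' ->]]]].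
    rewrite !psip_enc // => -[/inj1' E1 /inj2' E2].
    by rewrite (E1 Lu Lu') (E2 Lv Lv').
  - exact: mul_rec.
exists (maxn N1 N2), (K1 + K2), (muln M1 M2); split; first by rewrite addn_gt0 K1p.
split; first by rewrite muln_gt0 M1p M2p.
move=> n Nn Qn w [u [v [Lu [Lv ->]]]] Sw.
have Su : (size u <= n)%N.
  apply: leq_trans Sw; rewrite size_encs size_conv.
  by apply: leq_trans (leq_maxl _ (size v)) _; rewrite leq_pmull.
have Sv : (size v <= n)%N.
  apply: leq_trans Sw; rewrite size_encs size_conv.
  by apply: leq_trans (leq_maxr (size u) _) _; rewrite leq_pmull.
have H1 := B1 n (leq_trans (leq_maxl _ _) Nn) Qn u Lu Su.
have H2 := B2 n (leq_trans (leq_maxr _ _) Nn) Qn v Lv Sv.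
have D := Lp_dist Lu Lv H1 H2.
case: D => w0 [F0 [E0 S0]]; exists w0; split=> //; split=> //.
apply: Rle_trans S0 _.
have QM1 : (Q <= muln M1 n)%N by apply: leq_trans Qn _; rewrite leq_pmull.
have QM2 : (Q <= muln M2 n)%N by apply: leq_trans Qn _; rewrite leq_pmull.
have f1 : (f (muln M1 n) <= f (muln (muln M1 M2) n))%R.
  by apply: fmon => //; rewrite mulnAC leq_pmulr.
have f2 : (f (muln M2 n) <= f (muln (muln M1 M2) n))%R.
  apply: fmon => //; rewrite -mulnA leq_pmull //.
rewrite plus_INR Rmult_plus_distr_r.
apply: Rplus_le_compat; apply: Rmult_le_compat_l; try apply: pos_INR; done.
Qed.

End Nontriv.

Lemma regular_nil T : regular (fun w : seq T => w = [::]).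
Proof.
exists bool, true, (fun _ _ => false), (fun b => b) => w.
have E : forall w : seq T, foldl (fun (_ : bool) (_ : T) => false) false w = false by elim.
by case: w => [|t w] //=; rewrite E.
Qed.

Lemma triv_inB (Q : nat) (f : nat -> R) : frakF Q f -> generates A1 -> generates A2 ->
  (forall z, List.In z Ap -> z = gone G) -> inB Q f G.
Proof.
move=> [fmon fpos] gen1 gen2 Htriv.
have T1 : forall x, inS A1 x -> x = gone G1.
  move=> x /Xlist_inS Hx.
  by have /(congr1 (fun z : gcar G => z.1)) := Htriv _ (inAp Hx (Xlist_one A2)).
have T2 : forall x, inS A2 x -> x = gone G2.
  move=> x /Xlist_inS Hx.
  by have /(congr1 (fun z : gcar G => z.2)) := Htriv _ (inAp (Xlist_one A1) Hx).
have W1 : forall w, List.Forall (inS A1) w -> evalw (fun x => x) w = gone G1.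
  by elim=> //= x w IH H; inversion H; rewrite IH // (T1 x) // gmul1.
have W2 : forall w, List.Forall (inS A2) w -> evalw (fun x => x) w = gone G2.
  by elim=> //= x w IH H; inversion H; rewrite IH // (T2 x) // gmul1.
have Tg : forall g : gcar G, g = gone G.
  move=> [g1 g2]; have [w1 [F1 <-]] := gen1 g1; have [w2 [F2 <-]] := gen2 g2.
  by rewrite W1 // W2.
exists Ap; split; first exact: gen_prod.
exists Sigp, sgp; split; first exact: sgp_inj.
split.
  move=> x; split; first by move=> H; exists (exist _ x H).
  by move=> [[z H] <-].
exists (fun w => w = [::]), (fun _ => gone G); split.
  split.
  - exact: regular_nil.
  - by move=> g; exists [::]; split=> //; rewrite (Tg g).
  - by move=> u v -> ->.
  - move=> a Ha; apply: (regular_ext (L := fun w => w = [::])); last exact: regular_nil.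
    move=> z; split.
      move=> ->; exists [::], [::]; split; last by [].
      by split=> //; split=> //; rewrite (Htriv a Ha) gmul1.
    by move=> [u [v [[-> [-> _]] ->]]].
exists 0, 1, 1; split=> //; split=> //.
move=> n _ Qn w -> _; exists [::]; split=> //; split.
  by rewrite /= gmulV.
rewrite mul1n; apply: Rle_trans (pos_INR 0) _.
apply: Rmult_le_pos; [exact: pos_INR | exact: fpos].
Qed.
End Prod.


Theorem mainTheorem5 (Q : nat) (f : nat -> R) (G1 G2 : Grp) :
  frakF Q f -> inB Q f G1 -> inB Q f G2 -> inB Q f (prodGrp G1 G2).
Proof.
move=> Hf [A1 [gen1 [Sig1 [sg1 [inj1 [img1 [L1 [psi1 [ca1 B1]]]]]]]]]
          [A2 [gen2 [Sig2 [sg2 [inj2 [img2 [L2 [psi2 [ca2 B2]]]]]]]]].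
case: (classic (exists m, List.In m (Ap A1 A2) /\ m <> gone (prodGrp G1 G2))) => [[m [Hm Hm1]]|Hn].
  exact: (nontriv_inB inj1 img1 ca1 inj2 img2 ca2 Hm Hm1 Hf gen1 gen2 B1 B2).
apply: (triv_inB Hf gen1 gen2) => z Hz.
by apply: NNPP => Hz1; apply: Hn; exists z.
Qed.
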